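(* Let $A$ be an event and $X,Y$ random variables with discrete distributions such that $X=P(A\mid X)$ and $Y=P(A\mid Y)$. Fix $0<\delta<\tfrac12$, and suppose that for each possible value $(x,y)$ of $(X,Y)$ (i.e. $P(X=x,Y=y)>0$) with $|y-x|\ge1-\delta$ there is no other such possible value $(x',y')$ with $|y'-x'|\ge 1-\delta$ and either $x'=x$ or $y'=y$. Then $$P(|Y-X|\ge1-\delta)\le\frac{2\delta}{1+\delta}.$$ *)

(* Defs.v *)
From HB Require Import structures.
From mathcomp Require Import all_boot all_order all_algebra.
From mathcomp Require Import all_classical all_reals all_analysis.
Set Implicit Arguments. Unset Strict Implicit. Unset Printing Implicit Defensive.
Import Order.TTheory GRing.Theory Num.Theory.
Local Open Scope classical_set_scope.
Local Open Scope ring_scope.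

Definition discrete_rv d (T : measurableType d) (R : realType)
  (P : probability T R) (X : T -> R) : Prop :=
  exists S : set R, countable S /\ P (X @^-1` S) = 1%E.

(* X = P(A | X) for a discretely distributed X: on every atom {X = x} of
   positive probability, P(A | X = x) = x, i.e.
   P(A /\ X = x) = x * P(X = x).  (The event {X = x} with P(X=x) = 0 is
   negligible, since X is discrete.) *)
Definition is_cond_prob_of d (T : measurableType d) (R : realType)
  (P : probability T R) (A : set T) (X : T -> R) : Prop :=
  forall x : R, (0 < P (X @^-1` [set x]))%E ->
    P (A `&` X @^-1` [set x]) = (x%:E * P (X @^-1` [set x]))%E.

(* Main.v *)
Require Import Defs.
From HB Require Import structures.
From mathcomp Require Import all_boot all_order all_algebra.
From mathcomp Require Import all_classical all_reals all_analysis.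
From mathcomp Require Import lra.
Import Order.TTheory GRing.Theory Num.Theory.
Local Open Scope classical_set_scope.
Local Open Scope ring_scope.

Lemma key_ineq (R : realFieldType) (dl x y m a b am aX aY : R) :
  0 < dl -> 0 <= x -> x <= 1 -> 0 <= y -> y <= 1 -> 1 - dl <= `|y - x| ->
  0 <= m -> am <= aX -> am <= aY -> m - am <= a - aX -> m - am <= b - aY ->
  m <= a -> m <= b -> aX = x * a -> aY = y * b ->
  (1 + dl) * m <= dl * a + dl * b.
Proof.
move=> d0 x0 x1 y0 y1 hb m0 h1 h2 h3 h4 ma mb eX eY.
have [yx|xy] := lerP x y.
- rewrite ger0_norm ?subr_ge0 // in hb.
  have hm : m <= x * a + (1 - y) * b by nra.
  have e1 : x * (a - m) <= dl * (a - m) by apply: ler_wpM2r; lra.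
  have e2 : (1 - y) * (b - m) <= dl * (b - m) by apply: ler_wpM2r; lra.
  have e3 : (x + (1 - y)) * m <= dl * m by apply: ler_wpM2r; lra.
  nra.
- rewrite ltr0_norm ?subr_lt0 // in hb.
  have hm : m <= (1 - x) * a + y * b by nra.
  have e1 : (1 - x) * (a - m) <= dl * (a - m) by apply: ler_wpM2r; lra.
  have e2 : y * (b - m) <= dl * (b - m) by apply: ler_wpM2r; lra.
  have e3 : ((1 - x) + y) * m <= dl * m by apply: ler_wpM2r; lra.
  nra.
Qed.

Lemma fin_bound (R : realFieldType) (dl s1 s2 s : R) : 0 < dl -> s1 <= 1 ->
  s2 <= 1 -> (1 + dl) * s <= dl * s1 + dl * s2 -> s <= 2 * dl / (1 + dl).
Proof.
move=> d0 h1 h2 h.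
have e1 := ler_wpM2l (ltW d0) h1; have e2 := ler_wpM2l (ltW d0) h2.
rewrite ler_pdivlMr; last lra.
rewrite mulr1 in e1 e2; lra.
Qed.

Section aux.
Context d (T : measurableType d) (R : realType) (P : probability T R).

Lemma PE {S : set T} : measurable S -> P S = (fine (P S))%:E.
Proof. by move=> mS; rewrite fineK // fin_num_measure. Qed.

Lemma pr_ge0 (S : set T) : 0 <= fine (P S).
Proof. by apply: fine_ge0; exact: measure_ge0. Qed.

Lemma pr_le {S S' : set T} : measurable S -> measurable S' -> S `<=` S' ->
  fine (P S) <= fine (P S').
Proof.
move=> mS mS' SS'; rewrite -lee_fin -PE // -PE //.
by apply: le_measure => //; rewrite inE.
Qed.

Lemma pr_split (A S : set T) : measurable A -> measurable S ->
  fine (P S) = fine (P (A `&` S)) + fine (P (~` A `&` S)).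
Proof.
move=> mA mS.
have : P S = (P (A `&` S) + P (~` A `&` S))%E.
  rewrite -measureU; first by rewrite -setIUl setUv setTI.
  - exact: measurableI.
  - by apply: measurableI => //; exact: measurableC.
  - by rewrite setIACA setICr set0I.
rewrite (PE mS) (PE (measurableI _ _ mA mS)).
rewrite (PE (measurableI _ _ (measurableC mA) mS)) -EFinD.
by case.
Qed.

Lemma pr_le1 {S : set T} : measurable S -> fine (P S) <= 1.
Proof. by move=> mS; rewrite -lee_fin -PE //; exact: probability_le1. Qed.

Lemma PU2 {S S' : set T} : measurable S -> measurable S' ->
  (P (S `|` S') <= P S + P S')%E.
Proof. by move=> mS mS'; exact: measureU2. Qed.

End aux.
Arguments PU2 {d T R} P {S S'}.

Arguments PE {d T R} P {S}.
Arguments pr_le {d T R} P {S S'}.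
Arguments pr_le1 {d T R} P {S}.
Arguments pr_ge0 {d T R} P S.
Arguments pr_split {d T R} P {A S}.

Theorem lemma3p3 (d : measure_display) (T : measurableType d) (R : realType)
  (P : probability T R) (A : set T) (X Y : T -> R) (delta : R)
  (mA : measurable A) (mX : measurable_fun setT X) (mY : measurable_fun setT Y)
  (dX : discrete_rv P X) (dY : discrete_rv P Y)
  (cX : is_cond_prob_of P A X) (cY : is_cond_prob_of P A Y)
  (hd0 : 0 < delta) (hd1 : delta < 2^-1)
  (huniq : forall x y x' y' : R,
     (0 < P (X @^-1` [set x] `&` Y @^-1` [set y]))%E ->
     1 - delta <= `|y - x| ->
     (0 < P (X @^-1` [set x'] `&` Y @^-1` [set y']))%E ->
     1 - delta <= `|y' - x'| ->
     (x' = x \/ y' = y) -> x' = x /\ y' = y) :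
  (P [set t | (1 - delta <= `|Y t - X t|)%R] <= ((2 * delta / (1 + delta))%R)%:E)%E.
Proof.
have mXs x : measurable (X @^-1` [set x]).
  by have := mX measurableT [set x] (measurable_set1 x); rewrite setTI.
have mYs y : measurable (Y @^-1` [set y]).
  by have := mY measurableT [set y] (measurable_set1 y); rewrite setTI.
have mXY x y : measurable (X @^-1` [set x] `&` Y @^-1` [set y]).
  exact: measurableI.
have Xval x : (0 < P (X @^-1` [set x]))%E -> 0 <= x <= 1.
  move=> Px; have := cX x Px.
  rewrite (PE P (mXs x)) (PE P (measurableI _ _ mA (mXs x))) -EFinM; case=> h.
  have a0 : 0 < fine (P (X @^-1` [set x])) by rewrite -lte_fin -PE.
  have h1 := pr_ge0 P (A `&` X @^-1` [set x]).
  have h2 := pr_le P (measurableI _ _ mA (mXs x)) (mXs x) (@subIsetr _ A _).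
  rewrite h in h1 h2; apply/andP; split; nra.
have Yval y : (0 < P (Y @^-1` [set y]))%E -> 0 <= y <= 1.
  move=> Py; have := cY y Py.
  rewrite (PE P (mYs y)) (PE P (measurableI _ _ mA (mYs y))) -EFinM; case=> h.
  have a0 : 0 < fine (P (Y @^-1` [set y])) by rewrite -lte_fin -PE.
  have h1 := pr_ge0 P (A `&` Y @^-1` [set y]).
  have h2 := pr_le P (measurableI _ _ mA (mYs y)) (mYs y) (@subIsetr _ A _).
  rewrite h in h1 h2; apply/andP; split; nra.
have pair_ineq x y : (0 < P (X @^-1` [set x] `&` Y @^-1` [set y]))%E ->
    1 - delta <= `|y - x| ->
    (1 + delta) * fine (P (X @^-1` [set x] `&` Y @^-1` [set y])) <=
    delta * fine (P (X @^-1` [set x])) + delta * fine (P (Y @^-1` [set y])).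
  move=> Pm hb.
  have PXp : (0 < P (X @^-1` [set x]))%E.
    apply: (lt_le_trans Pm); apply: le_measure; rewrite ?inE //; by move=> t [].
  have PYp : (0 < P (Y @^-1` [set y]))%E.
    apply: (lt_le_trans Pm); apply: le_measure; rewrite ?inE //; by move=> t [].
  have /andP[x0 x1] := Xval x PXp.
  have /andP[y0 y1] := Yval y PYp.
  have eX : fine (P (A `&` X @^-1` [set x])) = x * fine (P (X @^-1` [set x])).
    have := cX x PXp.
    by rewrite (PE P (mXs x)) (PE P (measurableI _ _ mA (mXs x))) -EFinM; case.
  have eY : fine (P (A `&` Y @^-1` [set y])) = y * fine (P (Y @^-1` [set y])).
    have := cY y PYp.
    by rewrite (PE P (mYs y)) (PE P (measurableI _ _ mA (mYs y))) -EFinM; case.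
  have mAc := measurableC mA.
  have sX := pr_split P mA (mXs x).
  have sY := pr_split P mA (mYs y).
  have sM := pr_split P mA (mXY x y).
  have l1 := pr_le P (measurableI _ _ mA (mXY x y)) (measurableI _ _ mA (mXs x))
    (setIS (@subIsetl _ _ _)).
  have l2 := pr_le P (measurableI _ _ mA (mXY x y)) (measurableI _ _ mA (mYs y))
    (setIS (@subIsetr _ _ _)).
  have l3 := pr_le P (measurableI _ _ mAc (mXY x y)) (measurableI _ _ mAc (mXs x))
    (setIS (@subIsetl _ _ _)).
  have l4 := pr_le P (measurableI _ _ mAc (mXY x y)) (measurableI _ _ mAc (mYs y))
    (setIS (@subIsetr _ _ _)).
  have := pr_ge0 P (X @^-1` [set x] `&` Y @^-1` [set y]).
  have := pr_le P (mXY x y) (mXs x) (@subIsetl _ _ _).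
  have := pr_le P (mXY x y) (mYs y) (@subIsetr _ _ _).
  move: l1 l2 l3 l4 sX sY sM eX eY.
  set m := fine (P (X @^-1` [set x] `&` Y @^-1` [set y])).
  set a := fine (P (X @^-1` [set x])).
  set b := fine (P (Y @^-1` [set y])).
  set am := fine (P (A `&` (X @^-1` [set x] `&` Y @^-1` [set y]))).
  set aX := fine (P (A `&` X @^-1` [set x])).
  set aY := fine (P (A `&` Y @^-1` [set y])).
  move=> l1 l2 l3 l4 sX sY sM eX eY mb ma m0.
  apply: (key_ineq _ _ _ _ _ _ _ _ _ _ hd0 x0 x1 y0 y1 hb m0 l1 l2 _ _ ma mb eX eY); lra.
case: dX => Sx [cSx PSx]; case: dY => Sy [cSy PSy].
have /countable_injP[f injf] := countableX cSx cSy.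
pose bad (p : R * R) := 1 - delta <= `|p.2 - p.1|.
pose Qn n (p : R * R) := (Sx `*` Sy) p /\ f p = n /\ bad p.
pose E n := [set t | Qn n (X t, Y t)].
pose Qp n (p : R * R) :=
  Qn n p /\ (0 < P (X @^-1` [set p.1] `&` Y @^-1` [set p.2]))%E.
pose FX n := [set t | exists y, Qp n (X t, y)].
pose FY n := [set t | exists x, Qp n (x, Y t)].
have Quniq n p q : Qn n p -> Qn n q -> p = q.
  move=> [Gp [fp _]] [Gq [fq _]]; apply: injf; rewrite ?inE //.
  by rewrite fp fq.
have Ecases n : E n = set0 \/
    exists p, Qn n p /\ E n = X @^-1` [set p.1] `&` Y @^-1` [set p.2].
  have [[p Qnp]|nQ] := pselect (exists p, Qn n p).
  - right; exists p; split => //; apply/seteqP; split => t /=.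
    + by move=> /(Quniq _ _ _ ^~ Qnp) <-.
    + by case=> h1 h2; rewrite /E /= h1 h2 -surjective_pairing.
  - left; apply/seteqP; split => t //= Qt; apply: nQ; by exists (X t, Y t).
have mE n : measurable (E n).
  by case: (Ecases n) => [->|[p [_ ->]]]; [exact: measurable0 | exact: mXY].
have Fcases n : ((forall p, ~ Qp n p) /\ FX n = set0 /\ FY n = set0) \/
    exists p, Qp n p /\ FX n = X @^-1` [set p.1] /\ FY n = Y @^-1` [set p.2].
  have [[p Qpp]|nQ] := pselect (exists p, Qp n p).
  - right; exists p; split => //; split; apply/seteqP; split => t /=.
    + by case=> y /(fun h => Quniq _ _ _ h.1 Qpp.1) <-.
    + by move=> h; exists p.2; rewrite /Qp /= h -surjective_pairing.
    + by case=> x /(fun h => Quniq _ _ _ h.1 Qpp.1) <-.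
    + by move=> h; exists p.1; rewrite /Qp /= h -surjective_pairing.
  - left; split; first by move=> p Qpp; apply: nQ; exists p.
    split; apply/seteqP; split => t //=; [case=> y Q'|case=> x Q'];
      apply: nQ; eexists; exact Q'.
have mFX n : measurable (FX n).
  by case: (Fcases n) => [[_ [-> _]]|[p [_ [-> _]]]]; [exact: measurable0|exact: mXs].
have mFY n : measurable (FY n).
  by case: (Fcases n) => [[_ [_ ->]]|[p [_ [_ ->]]]]; [exact: measurable0|exact: mYs].
have pn_ineq n : (1 + delta) * fine (P (E n)) <=
    delta * fine (P (FX n)) + delta * fine (P (FY n)).
  have rhs0 : 0 <= delta * fine (P (FX n)) + delta * fine (P (FY n)).
    by apply: addr_ge0; apply: mulr_ge0 (ltW hd0) (pr_ge0 _ _).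
  case: (Ecases n) => [->|[p [Qnp ->]]]; first by rewrite measure0 /= mulr0.
  have [Pz|Ppos] : P (X @^-1` [set p.1] `&` Y @^-1` [set p.2]) = 0%E \/
      (0 < P (X @^-1` [set p.1] `&` Y @^-1` [set p.2]))%E.
    have := measure_ge0 P (X @^-1` [set p.1] `&` Y @^-1` [set p.2]).
    by rewrite le_eqVlt => /orP[/eqP<-|]; auto.
  - by rewrite Pz /= mulr0.
  case: (Fcases n) => [[nQ _]|[q [Qq [-> ->]]]].
  - by exfalso; apply: (nQ p).
  have pq := Quniq _ _ _ Qnp Qq.1; rewrite -pq.
  exact: pair_ineq Ppos Qnp.2.2.
have trivFX : trivIset setT FX.
  move=> i j _ _ [t [[y Qi] [y' Qj]]].
  have [_ eyy] := huniq (X t) y (X t) y' Qi.2 Qi.1.2.2 Qj.2 Qj.1.2.2 (or_introl erefl).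
  subst y'.
  by case: Qi => [[_ [<- _]] _]; case: Qj => [[_ [<- _]] _].
have trivFY : trivIset setT FY.
  move=> i j _ _ [t [[x Qi] [x' Qj]]].
  have [exx _] := huniq x (Y t) x' (Y t) Qi.2 Qi.1.2.2 Qj.2 Qj.1.2.2 (or_intror erefl).
  subst x'.
  by case: Qi => [[_ [<- _]] _]; case: Qj => [[_ [<- _]] _].
have sumF (F : nat -> set T) : (forall n, measurable (F n)) -> trivIset setT F ->
    forall N, \sum_(k < N) fine (P (F k)) <= 1.
  move=> mF tF N.
  have mU : measurable (\big[setU/set0]_(i < N) F i).
    by apply: bigsetU_measurable => i _; exact: mF.
  have := probability_le1 P mU.
  rewrite measure_bigsetU //.
  rewrite (eq_bigr (fun k : 'I_N => (fine (P (F k)))%:E)); last by move=> k _; exact: PE.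
  by rewrite sumEFin lee_fin.
have partial N : (\sum_(k < N) P (E k) <= (2 * delta / (1 + delta))%:E)%E.
  rewrite (eq_bigr (fun k : 'I_N => (fine (P (E k)))%:E)); last by move=> k _; exact: PE.
  rewrite sumEFin lee_fin.
  apply: (@fin_bound _ _ _ _ _ hd0 (sumF _ mFX trivFX N) (sumF _ mFY trivFY N)).
  rewrite mulr_sumr.
  apply: (@le_trans _ _ (\sum_(k < N) (delta * fine (P (FX k)) + delta * fine (P (FY k))))).
    by apply: ler_sum => k _; exact: pn_ineq.
  by rewrite big_split /= -!mulr_sumr.
have series_le : (\sum_(n <oo) P (E n) <= (2 * delta / (1 + delta))%:E)%E.
  apply: lime_le; first by apply: is_cvg_nneseries => n _ _; exact: measure_ge0.
  by apply: nearW => N; rewrite big_mkord; exact: partial.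
have mSx : measurable (X @^-1` Sx).
  have := mX measurableT Sx (countable_measurable (@measurable_set1 R) cSx).
  by rewrite setTI.
have mSy : measurable (Y @^-1` Sy).
  have := mY measurableT Sy (countable_measurable (@measurable_set1 R) cSy).
  by rewrite setTI.
pose U := X @^-1` Sx `&` Y @^-1` Sy.
have mU : measurable U by exact: measurableI.
have PUc : P (~` U) = 0%E.
  apply/eqP; rewrite eq_le measure_ge0 andbT.
  rewrite /U setCI.
  have h1 : P (~` (X @^-1` Sx)) = 0%E.
    by rewrite probability_setC // PSx subee.
  have h2 : P (~` (Y @^-1` Sy)) = 0%E.
    by rewrite probability_setC // PSy subee.
  have := PU2 P (measurableC mSx) (measurableC mSy).
  by rewrite h1 h2 adde0.
pose B := [set t | (1 - delta <= `|Y t - X t|)%R].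
have mB : measurable B.
  have mf : measurable_fun setT (fun t => `|Y t - X t|).
    apply: measurableT_comp; first exact: measurable_realfun.normr_measurable.
    exact: measurable_realfun.measurable_funB.
  have := mf measurableT _ (measurable_itv `[(1 - delta), +oo[).
  rewrite setTI; congr measurable; apply/seteqP; split => t /=;
    by rewrite in_itv /= andbT.
have step : (P (B `&` U) <= \sum_(n <oo) P (E n))%E.
  apply: measure_sigma_subadditive => //; first exact: measurableI.
  by move=> t [Bt [Sxt Syt]]; exists (f (X t, Y t)).
have hle : (P B <= P ((B `&` U) `|` ~` U))%E.
  apply: le_measure; rewrite ?inE //.
  - by apply: measurableU; [exact: measurableI | exact: measurableC].
  - by move=> t Bt; have [Ut|nUt] := pselect (U t); [left|right].
apply: le_trans hle _.
apply: le_trans (PU2 P (measurableI _ _ mB mU) (measurableC mU)) _.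
rewrite PUc adde0.
exact: le_trans step series_le.
Qed.
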